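(* Let $1\le d<n$, let $w\le v$ (Bruhat order) in $W^{P_d}=\{u\in S_n\mid u_1<\cdots<u_d,\ u_{d+1}<\cdots<u_n\}$, and let $\lambda=\lambda_w$, $\mu=\lambda_v$. Then the map $f$ defined by $$f(T)=\{(x,x+j-i)\mid (i,j)\in D_\lambda,\ x\in T(i,j)\}$$ is a bijection from $\mathcal T_\lambda(\mu)$ to $\mathcal E_\lambda(\mu)$.
   Context: For $u\in W^{P_d}$, $\lambda_u$ is the partition $(\lambda_u)_i=u_{d+1-i}-(d+1-i)$, $i=1,\ldots,d$; since $w\le v$, $\lambda_i\le\mu_i$ for all $i$. The Young diagram $D_\lambda$ is the set of boxes $(i,j)$ with $1\le i\le d$, $1\le j\le\lambda_i$ (rows numbered top to bottom, columns left to right), so $D_\lambda\subseteq D_\mu$. Excitations: for $C\subseteq D_\mu$ and $(i,j)\in C$ with $(i+1,j),(i,j+1),(i+1,j+1)\in D_\mu\setminus C$, a type 1 excitation replaces $C$ by $C\setminus\{(i,j)\}\cup\{(i+1,j+1)\}$ and a type 2 excitation replaces $C$ by $C\cup\{(i+1,j+1)\}$; $\mathcal E_\lambda(\mu)$ is the set of subsets of $D_\mu$ obtained from $D_\lambda$ by sequences of excitations. A set-valued filling of $D_\lambda$ assigns to each box $(i,j)$ a nonempty subset $T(i,j)\subseteq\{1,\ldots,d\}$; it is semistandard (a set-valued tableau) if every entry of box $(i,j)$ is $\le$ every entry of box $(i,j+1)$ and $<$ every entry of box $(i+1,j)$ whenever these boxes exist. It is restricted by $\mu$ if $x+j-i\le\mu_x$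 for every box $(i,j)$ and every $x\in T(i,j)$. $\mathcal T_\lambda(\mu)$ is the set of set-valued tableaux of shape $\lambda$ restricted by $\mu$. *)

(* Defs.v *)
From mathcomp Require Import all_boot all_fingroup.
Set Implicit Arguments. Unset Strict Implicit. Unset Printing Implicit Defensive.

(* 1-indexed one-line notation: pval u k = u_k for 1 <= k <= n (values in 1..n),
   where u : 'S_n acts on 'I_n = {0,...,n-1}; pval u k = 0 out of range. *)
Definition pval n (u : 'S_n) (k : nat) : nat :=
  match (insub k.-1 : option 'I_n) with Some o => (u o).+1 | None => 0 end.

Definition grassmannian n d (u : 'S_n) : Prop :=
  (forall a b, 1 <= a -> a < b -> b <= d -> pval u a < pval u b) /\
  (forall a b, d.+1 <= a -> a < b -> b <= n -> pval u a < pval u b).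

Definition ninv n (u : 'S_n) : nat :=
  #|[set p : 'I_n * 'I_n | (p.1 < p.2) && (u p.2 < u p.1)]|.

Definition bruhat_step n (u u' : 'S_n) : bool :=
  [exists i : 'I_n, exists j : 'I_n,
     [&& i < j, u' == (u * tperm i j)%g & ninv u < ninv u']].

Definition bruhat_le n (w v : 'S_n) : bool := connect (@bruhat_step n) w v.

Definition lambda_of n d (u : 'S_n) (i : nat) : nat :=
  pval u (d.+1 - i) - (d.+1 - i).

(* Boxes (i,j), 1-indexed coordinates; the ambient type 'I_d.+1 * 'I_n.+1
   is large enough to contain every Young diagram D_lambda with lambda_1 <= n - d. *)
Definition box (n d : nat) := ('I_d.+1 * 'I_n.+1)%type.

Definition diagram n d (lam : nat -> nat) : {set box n d} :=
  [set b : box n d | [&& 1 <= b.1, 1 <= b.2 & (b.2 : nat) <= lam b.1]].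

Definition exc_step n d (mu : nat -> nat) (C C' : {set box n d}) : bool :=
  [exists b : box n d, exists b1 : box n d, exists b2 : box n d,
   exists b3 : box n d,
    [&& b \in C,
        ((b1.1 : nat) == (b.1 : nat).+1) && ((b1.2 : nat) == b.2),
        ((b2.1 : nat) == b.1) && ((b2.2 : nat) == (b.2 : nat).+1),
        ((b3.1 : nat) == (b.1 : nat).+1) && ((b3.2 : nat) == (b.2 : nat).+1),
        b1 \in diagram n d mu :\: C, b2 \in diagram n d mu :\: C,
        b3 \in diagram n d mu :\: C &
        (C' == (C :\ b) :|: [set b3]) || (C' == C :|: [set b3])]].

Definition excitations n d (lam mu : nat -> nat) : {set {set box n d}} :=
  [set C | connect (@exc_step n d mu) (diagram n d lam) C].

(* set-valued fillings: a subset of {1..d} (encoded in 'I_d.+1, 0 excluded)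
   for each box; boxes outside D_lambda carry the empty set (normalization). *)
Definition filling n d := {ffun box n d -> {set 'I_d.+1}}.

Definition is_svt n d (lam mu : nat -> nat) (T : filling n d) : bool :=
  let D := diagram n d lam in
  [&& [forall b, (b \notin D) ==> (T b == set0)],
      [forall b, (b \in D) ==> (T b != set0)],
      [forall b, forall x, (x \in T b) ==> (1 <= x)],
      [forall b, forall b', [&& b \in D, b' \in D, (b'.1 : nat) == b.1 &
            (b'.2 : nat) == (b.2 : nat).+1] ==>
          [forall x, forall y, (x \in T b) && (y \in T b') ==> (x <= y)]],
      [forall b, forall b', [&& b \in D, b' \in D, (b'.1 : nat) == (b.1 : nat).+1 &
            (b'.2 : nat) == b.2] ==>
          [forall x, forall y, (x \in T b) && (y \in T b') ==> (x < y)]] &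
      [forall b, forall x, (b \in D) && (x \in T b) ==>
          (x + b.2 - b.1 <= mu x)]].

Definition svt_set n d (lam mu : nat -> nat) : {set filling n d} :=
  [set T | @is_svt n d lam mu T].

Definition fmap n d (lam : nat -> nat) (T : filling n d) : {set box n d} :=
  [set c : box n d | [exists b, exists x,
     [&& b \in diagram n d lam, x \in T b, (c.1 : nat) == x &
         (c.2 : nat) == x + b.2 - b.1]]].

Arguments diagram : clear implicits.
Arguments exc_step : clear implicits.
Arguments excitations : clear implicits.
Arguments is_svt : clear implicits.
Arguments svt_set : clear implicits.
Arguments fmap : clear implicits.

(* Main.v *)
From mathcomp Require Import all_boot all_fingroup.
From mathcomp Require Import zify.
Require Import Defs.
From Stdlib Require Import Classical.
Set Implicit Arguments. Unset Strict Implicit. Unset Printing Implicit Defensive.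

Lemma pvalE n (u : 'S_n) (o : 'I_n) : pval u o.+1 = (u o).+1.
Proof.
rewrite /pval /=. case: insubP => [o' _ Ho'|]; last by rewrite ltn_ord.
by congr (_.+1); congr (u _); apply: val_inj.
Qed.

Lemma pval_le n (u : 'S_n) k : pval u k <= n.
Proof. rewrite /pval; case: insub => [o|] //; exact: ltn_ord. Qed.

Lemma grass_lt n d (u : 'S_n) : grassmannian d u ->
  forall o o' : 'I_n, o < o' -> o' < d -> u o < u o'.
Proof.
case=> G _ o o' H1 H2; have := G o.+1 o'.+1; rewrite !pvalE ltnS; apply; lia.
Qed.

Definition cnt n (u : 'S_n) (k m : nat) := \sum_(x < n) ((x < k) && (m <= u x) : nat).

Section Step.
Variables (n : nat) (u : 'S_n) (i j : 'I_n).
Hypothesis Hij : i < j.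
Let p := (u^-1)%g i.
Let q := (u^-1)%g j.
Let u' := (u * tperm i j)%g.
Lemma up : u p = i. Proof. by rewrite /p permKV. Qed.
Lemma uq : u q = j. Proof. by rewrite /q permKV. Qed.
Lemma pq : p != q.
Proof. apply/eqP=> E; have := uq; rewrite -E up => E'; move: Hij; rewrite E'; lia. Qed.

Lemma u'E x : u' x = u (tperm p q x).
Proof.
rewrite /u' permM; case: tpermP => [->|->|/eqP Hp /eqP Hq].
- by rewrite up tpermL uq.
- by rewrite uq tpermR up.
- rewrite tpermD //; apply/eqP => E.
  + by move: Hp; rewrite /p E permK eqxx.
  + by move: Hq; rewrite /q E permK eqxx.
Qed.

Definition cond (pr : 'I_n * 'I_n) :=
  ((pr.1 < q) && ((pr.2 == p) || (pr.2 == q))) ||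
  ((p < pr.2) && ((pr.1 == p) || (pr.1 == q))).

Definition phi (pr : 'I_n * 'I_n) :=
  if cond pr then (tperm p q pr.1, tperm p q pr.2) else pr.

Lemma tp_val (x : 'I_n) : (x == p) || (x == q) -> (tperm p q x == p) || (tperm p q x == q).
Proof. by case/orP=> /eqP ->; rewrite ?tpermL ?tpermR eqxx ?orbT. Qed.

Lemma tp_out (x : 'I_n) : x != p -> x != q -> tperm p q x = x.
Proof. by move=> H1 H2; rewrite tpermD // eq_sym. Qed.

Hypothesis Hqp : q < p.

Lemma phiK : cancel phi phi.
Proof.
case=> a b; rewrite /phi /=.
case Hc: (cond (a, b)); last by rewrite Hc.
have Hc' : cond (tperm p q a, tperm p q b).
  move: Hc; rewrite /cond /= => /orP [/andP [Ha Hb]|/andP [Hb Ha]].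
  - have Ap : a != p by apply/eqP=> E; move: Ha; rewrite E; lia.
    have Aq : a != q by apply/eqP=> E; move: Ha; rewrite E; lia.
    by rewrite tp_out // Ha tp_val.
  - have Bp : b != p by apply/eqP=> E; move: Hb; rewrite E; lia.
    have Bq : b != q by apply/eqP=> E; move: Hb; rewrite E; lia.
    by rewrite (tp_out Bp Bq) Hb tp_val ?orbT.
by rewrite Hc' /= !tpermK.
Qed.

Definition Inv (s : 'S_n) := [set pr : 'I_n * 'I_n | (pr.1 < pr.2) && (s pr.2 < s pr.1)].

Lemma phi_sub : phi @: Inv u' \subset Inv u.
Proof.
apply/subsetP=> pr' /imsetP [[a b]]; rewrite inE /= => /andP [Hab]; rewrite !u'E => Hv ->.
rewrite /phi inE /=.
case Hc: (cond (a, b)); rewrite /=.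
  rewrite Hv andbT.
  move: Hc; rewrite /cond /= => /orP [/andP [Ha Hb]|/andP [Hb Ha]].
  - have Ap : a != p by apply/eqP=> E; move: Ha; rewrite E; lia.
    have Aq : a != q by apply/eqP=> E; move: Ha; rewrite E; lia.
    rewrite tp_out //.
    by case/orP: Hb => /eqP ->; rewrite ?tpermL ?tpermR; lia.
  - have Bp : b != p by apply/eqP=> E; move: Hb; rewrite E; lia.
    have Bq : b != q by apply/eqP=> E; move: Hb; rewrite E; lia.
    rewrite (tp_out Bp Bq).
    by case/orP: Ha => /eqP ->; rewrite ?tpermL ?tpermR; lia.
rewrite Hab /=.
have Hup := up; have Huq := uq.
have [Ap|Ap] := eqVneq a p.
  exfalso; move: Hc; rewrite /cond /= Ap eqxx orTb andbT -Ap Hab orbT.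
  by [].
have [Aq|Aq] := eqVneq a q.
  have [Bp|Bp] := eqVneq b p; first by rewrite Aq Bp Hup Huq.
  have [Bq|Bq] := eqVneq b q; first by move: Hab; rewrite Aq Bq ltnn.
  move: Hc; rewrite /cond /= Aq eqxx orbT andbT (negbTE Bp) (negbTE Bq) /= => /negbT.
  rewrite ?ltnn ?andbF ?orbF /= -leqNgt => Hb.
  move: Hv; rewrite (tp_out Bp Bq) Aq tpermR Hup Huq; lia.
have [Bp|Bp] := eqVneq b p.
  move: Hc; rewrite /cond /= Bp eqxx /= (negbTE Ap) (negbTE Aq) andbF orbF => /negbT.
  rewrite andbT -leqNgt => Ha.
  move: Hv; rewrite (tp_out Ap Aq) Bp tpermL Hup Huq; lia.
have [Bq|Bq] := eqVneq b q.
  exfalso; move: Hc; rewrite /cond /= Bq eqxx orbT andbT -Bq Hab.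
  by [].
by move: Hv; rewrite (tp_out Ap Aq) (tp_out Bp Bq).
Qed.

Lemma ninv_le : ninv u' <= ninv u.
Proof.
rewrite /ninv -(card_imset _ (can_inj phiK)); apply: subset_leq_card; exact: phi_sub.
Qed.
End Step.

Lemma step_cnt n (u v : 'S_n) k m : bruhat_step u v -> cnt u k m <= cnt v k m.
Proof.
case/existsP=> i /existsP [j /and3P [Hij /eqP -> Hinv]].
set p := (u^-1)%g i; set q := (u^-1)%g j.
have Hpq : p < q.
  case: (ltngtP p q) => // H.
  - by move: Hinv; rewrite ltnNge (ninv_le Hij H).
  - by move: (pq u Hij); rewrite -/p -/q (val_inj H) eqxx.
have E : forall u0 : 'S_n, cnt u0 k m = ((p < k) && (m <= u0 p)) + ((q < k) && (m <= u0 q))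
   + \sum_(x < n | (x != p) && (x != q)) ((x < k) && (m <= u0 x)).
  move=> u0; rewrite /cnt (bigD1 p) //= (bigD1 q) /=; last by rewrite eq_sym pq.
  by rewrite addnA.
rewrite !E.
have -> : \sum_(x < n | (x != p) && (x != q)) ((x < k) && (m <= (u * tperm i j)%g x))
   = \sum_(x < n | (x != p) && (x != q)) ((x < k) && (m <= u x)).
  apply: eq_bigr => x /andP [Hp Hq]; rewrite u'E // tp_out //.
rewrite !u'E // tpermL tpermR up uq.
have H1 : q < k -> p < k by lia.
have H2 : m <= i -> m <= j by lia.
rewrite leq_add2r.
move: H1 H2; case: (q < k); case: (p < k); case: (m <= i); case: (m <= j) => //= H1 H2;
  try (by have := H1 isT); try (by have := H2 isT).
Qed.

Lemma bruhat_cnt n (w v : 'S_n) k m : bruhat_le w v -> cnt w k m <= cnt v k m.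
Proof.
case/connectP=> s Hp ->; elim: s w Hp => [|u s IH] w //= /andP [Hs Hp].
exact: leq_trans (step_cnt k m Hs) (IH _ Hp).
Qed.

Lemma bruhat_pointwise n d (w v : 'S_n) : grassmannian d w -> grassmannian d v ->
  bruhat_le w v -> forall o : 'I_n, o < d -> w o <= v o.
Proof.
move=> Gw Gv B o Ho; rewrite leqNgt; apply/negP => Hlt.
have := bruhat_cnt d (w o) B.
rewrite leqNgt => /negP; apply.
rewrite /cnt (bigD1 o) //= [X in _ < X](bigD1 o) //= leqnn Ho /=.
rewrite [w o <= v o]leqNgt Hlt /=.
rewrite add0n add1n ltnS; apply: leq_sum => x Hx.
case Hxd: (x < d) => //=; case Hv: (w o <= v x) => //=.
have Hox : o < x.
  case: (ltngtP o x) => // H.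
  - by have := grass_lt Gv H Ho; lia.
  - by move: Hx; rewrite (val_inj H) eqxx.
by have := grass_lt Gw Hox Hxd; lia.
Qed.

Lemma lam_part n d (u : 'S_n) : grassmannian d u ->
  forall i, 1 <= i -> i < d -> lambda_of d u i.+1 <= lambda_of d u i.
Proof.
move=> [G _] i H1 H2; rewrite /lambda_of subSS.
have := G (d - i) (d.+1 - i); lia.
Qed.

Lemma lam_le n d (u : 'S_n) i : lambda_of d u i <= n.
Proof. rewrite /lambda_of; have := pval_le u (d.+1 - i); lia. Qed.

Lemma lam_sub n d (w v : 'S_n) : d < n -> grassmannian d w -> grassmannian d v ->
  bruhat_le w v -> forall i, 1 <= i <= d -> lambda_of d w i <= lambda_of d v i.
Proof.
move=> Hdn Gw Gv B i /andP [H1 H2]; rewrite /lambda_of.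
have Hk : (d.+1 - i).-1 < n by lia.
have -> : d.+1 - i = (Ordinal Hk).+1 by rewrite /=; lia.
rewrite !pvalE; have := bruhat_pointwise Gw Gv B (o:=Ordinal Hk); rewrite /=.
move=> H; have := H ltac:(lia); lia.
Qed.


Lemma ex_min (P : nat -> Prop) : (exists k, P k) -> exists k, P k /\ forall k', k' < k -> ~ P k'.
Proof.
case=> k; elim/ltn_ind: k => k IH Hk.
case: (classic (exists k', k' < k /\ P k')) => [[k' [H1 H2]]|H]; first exact: IH H1 H2.
exists k; split => // k' H1 H2; apply: H; by exists k'.
Qed.

Section Comb.
Variables (n d : nat) (lam mu : nat -> nat).
Hypothesis lamP : forall i, 1 <= i -> i < d -> lam i.+1 <= lam i.
Hypothesis muP : forall i, 1 <= i -> i < d -> mu i.+1 <= mu i.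
Hypothesis lam_mu : forall i, 1 <= i <= d -> lam i <= mu i.
Hypothesis mu_n : forall i, mu i <= n.

Lemma lam_mono i j : 1 <= i -> i <= j -> j <= d -> lam j <= lam i.
Proof.
move=> Hi Hij Hj; have E : j = i + (j - i) by lia.
move: Hj; rewrite E; elim: (j - i) => [|k IH] H; first by rewrite addn0.
rewrite addnS; apply: leq_trans (IH _); [apply: lamP; lia | lia].
Qed.

Definition mkb (i j : nat) : box n d := (inord i, inord j).
Definition tm (T : filling n d) (i j x : nat) : bool :=
  [&& i <= d, j <= n, x <= d & (inord x : 'I_d.+1) \in T (mkb i j)].
Definition inD i j := [&& 1 <= i, i <= d, 1 <= j & j <= lam i].

Lemma mkb_val (b : box n d) : mkb b.1 b.2 = b.
Proof. by case: b => i j; rewrite /mkb !inord_val. Qed.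

Lemma box_ext (b c : box n d) : b.1 = c.1 :> nat -> b.2 = c.2 :> nat -> b = c.
Proof. by case: b c => [i j] [i' j'] /= /val_inj -> /val_inj ->. Qed.

Lemma mkb1 i j : i <= d -> (mkb i j).1 = i :> nat.
Proof. by move=> H; rewrite /= inordK. Qed.
Lemma mkb2 i j : j <= n -> (mkb i j).2 = j :> nat.
Proof. by move=> H; rewrite /= inordK. Qed.

Lemma ord_le (b : box n d) : b.1 <= d /\ b.2 <= n.
Proof. by split; rewrite -ltnS; apply: ltn_ord. Qed.

Lemma tm_box T (b : box n d) (x : 'I_d.+1) : tm T b.1 b.2 x = (x \in T b).
Proof.
have [H1 H2] := ord_le b; have Hx : (x : nat) <= d by rewrite -ltnS.
by rewrite /tm H1 H2 Hx mkb_val inord_val.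
Qed.

Lemma inD_box (b : box n d) : (b \in diagram n d lam) = inD b.1 b.2.
Proof. have [H1 _] := ord_le b; by rewrite inE /inD H1. Qed.

Lemma Dm_box (b : box n d) :
  (b \in diagram n d mu) = [&& 1 <= b.1, 1 <= b.2 & b.2 <= mu b.1].
Proof. by rewrite inE. Qed.

Lemma inD_n i j : inD i j -> j <= n.
Proof.
case/and4P=> H1 H2 H3 H4; apply: leq_trans H4 _; apply: leq_trans (lam_mu _) _;
  [by rewrite H1 | exact: mu_n].
Qed.

Lemma inD_mkb i j : inD i j ->
  [/\ mkb i j \in diagram n d lam, (mkb i j).1 = i :> nat & (mkb i j).2 = j :> nat].
Proof.
move=> H; have Hn := inD_n H; move: (H) => /and4P [H1 H2 H3 H4].
by rewrite inD_box !mkb1 ?mkb2.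
Qed.

Definition svtP (T : filling n d) : Prop :=
  (forall i j x, tm T i j x -> inD i j /\ 1 <= x) /\
  (forall i j, inD i j -> exists x, tm T i j x) /\
  (forall i j x y, tm T i j x -> tm T i j.+1 y -> x <= y) /\
  (forall i j x y, tm T i j x -> tm T i.+1 j y -> x < y) /\
  (forall i j x, tm T i j x -> x + j - i <= mu x).
Lemma SvtP T : (forall i j x, tm T i j x -> inD i j /\ 1 <= x) ->
  (forall i j, inD i j -> exists x, tm T i j x) ->
  (forall i j x y, tm T i j x -> tm T i j.+1 y -> x <= y) ->
  (forall i j x y, tm T i j x -> tm T i.+1 j y -> x < y) ->
  (forall i j x, tm T i j x -> x + j - i <= mu x) -> svtP T.
Proof. by move=> H1 H2 H3 H4 H5; split; [|split; [|split; [|split]]]. Qed.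
Section Proj.
Variable T : filling n d.
Hypothesis H : svtP T.
Lemma sv_supp i j x : tm T i j x -> inD i j /\ 1 <= x. Proof. by case: H => [h _]; apply: h. Qed.
Lemma sv_ne i j : inD i j -> exists x, tm T i j x. Proof. by case: H => [_ [h _]]; apply: h. Qed.
Lemma sv_row i j x y : tm T i j x -> tm T i j.+1 y -> x <= y. Proof. by case: H => [_ [_ [h _]]]; apply: h. Qed.
Lemma sv_col i j x y : tm T i j x -> tm T i.+1 j y -> x < y. Proof. by case: H => [_ [_ [_ [h _]]]]; apply: h. Qed.
Lemma sv_mu i j x : tm T i j x -> x + j - i <= mu x. Proof. by case: H => [_ [_ [_ [_ h]]]]; apply: h. Qed.
End Proj.

Lemma svtE T : is_svt n d lam mu T <-> svtP T.
Proof.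
rewrite /is_svt; split.
- case/andP => H1 /andP [H2 /andP [H3 /andP [H4 /andP [H5 H6]]]].
  have supp : forall i j x, tm T i j x -> inD i j /\ 1 <= x.
    move=> i j x Htm; move: (Htm) => /and4P [Hi Hj Hx Hin].
    have Hb : mkb i j \in diagram n d lam.
      apply/negPn/negP => Hn; have /eqP E := implyP (forallP H1 (mkb i j)) Hn.
      by rewrite E inE in Hin.
    split; first by move: Hb; rewrite inD_box mkb1 // mkb2.
    by have := implyP (forallP (forallP H3 (mkb i j)) (inord x)) Hin; rewrite inordK.
  apply: SvtP => //.
  + move=> i j HD; have [Hb E1 E2] := inD_mkb HD.
    have /set0Pn [x Hx] := implyP (forallP H2 (mkb i j)) Hb.
    by exists x; have := tm_box T (mkb i j) x; rewrite E1 E2 => ->.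
  + move=> i j x y Hx Hy; have [HD _] := supp _ _ _ Hx; have [HD' _] := supp _ _ _ Hy.
    have [Hb E1 E2] := inD_mkb HD; have [Hb' E1' E2'] := inD_mkb HD'.
    move: Hx Hy => /and4P [Hi Hj Hx Hxin] /and4P [Hi' Hj' Hy Hyin].
    have := implyP (forallP (forallP H4 (mkb i j)) (mkb i j.+1)).
    rewrite Hb Hb' /= !inordK ?eqxx // => /(_ isT) /forallP /(_ (inord x)) /forallP /(_ (inord y)).
    by rewrite Hxin Hyin !inordK // => /implyP; apply.
  + move=> i j x y Hx Hy; have [HD _] := supp _ _ _ Hx; have [HD' _] := supp _ _ _ Hy.
    have [Hb E1 E2] := inD_mkb HD; have [Hb' E1' E2'] := inD_mkb HD'.
    move: Hx Hy => /and4P [Hi Hj Hx Hxin] /and4P [Hi' Hj' Hy Hyin].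
    have := implyP (forallP (forallP H5 (mkb i j)) (mkb i.+1 j)).
    rewrite Hb Hb' /= !inordK ?eqxx // => /(_ isT) /forallP /(_ (inord x)) /forallP /(_ (inord y)).
    by rewrite Hxin Hyin !inordK // => /implyP; apply.
  + move=> i j x Hx; have [HD _] := supp _ _ _ Hx; have [Hb E1 E2] := inD_mkb HD.
    move: Hx => /and4P [_ _ Hx Hxin].
    have := implyP (forallP (forallP H6 (mkb i j)) (inord x)).
    by rewrite Hb Hxin E1 E2 !inordK //; apply.
- case=> supp [ne [row [col mu']]].
  repeat (apply/andP; split).
  + apply/forallP => b; apply/implyP => Hb; apply/eqP/setP => x; rewrite in_set0.
    apply/negP => Hx; rewrite -tm_box in Hx; have [HD _] := supp _ _ _ Hx.
    by rewrite inD_box HD in Hb.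
  + apply/forallP => b; apply/implyP; rewrite inD_box => Hb.
    have [x Hx] := ne _ _ Hb; move: Hx => /and4P [_ _ _]; rewrite mkb_val => Hx.
    by apply/set0Pn; exists (inord x).
  + apply/forallP => b; apply/forallP => x; apply/implyP; rewrite -tm_box => Hx.
    by have [] := supp _ _ _ Hx.
  + apply/forallP => b; apply/forallP => b'; apply/implyP => /and4P [_ _ /eqP E1 /eqP E2].
    apply/forallP => x; apply/forallP => y; apply/implyP => /andP [Hx Hy].
    rewrite -tm_box in Hx; rewrite -tm_box E1 E2 in Hy; exact: row Hx Hy.
  + apply/forallP => b; apply/forallP => b'; apply/implyP => /and4P [_ _ /eqP E1 /eqP E2].
    apply/forallP => x; apply/forallP => y; apply/implyP => /andP [Hx Hy].
    rewrite -tm_box in Hx; rewrite -tm_box E1 E2 in Hy; exact: col Hx Hy.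
  + apply/forallP => b; apply/forallP => x; apply/implyP => /andP [_ Hx].
    rewrite -tm_box in Hx; exact: mu' Hx.
Qed.

Lemma tm_ext T1 T2 : (forall i j x, tm T1 i j x = tm T2 i j x) -> T1 = T2.
Proof. move=> H; apply/ffunP => b; apply/setP => x; by rewrite -!tm_box. Qed.

Lemma fmapP T (HT : svtP T) (c : box n d) : c \in fmap n d lam T <->
  exists i j x, [/\ tm T i j x, c.1 = x :> nat & c.2 = x + j - i :> nat].
Proof.
rewrite inE; split.
- case/existsP => b /existsP [x /and4P [Hb Hx /eqP E1 /eqP E2]].
  by exists b.1, b.2, x; rewrite tm_box.
- case=> i [j [x [Htm E1 E2]]]; have [HD _] := sv_supp HT Htm.
  have [Hb Hb1 Hb2] := inD_mkb HD; move: Htm => /and4P [_ _ Hx Hin].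
  apply/existsP; exists (mkb i j); apply/existsP; exists (inord x).
  by rewrite Hb Hin /= Hb1 Hb2 inordK // E1 E2 !eqxx.
Qed.

Lemma fmap_mem T (HT : svtP T) i j x (c : box n d) :
  tm T i j x -> c.1 = x :> nat -> c.2 = x + j - i :> nat -> c \in fmap n d lam T.
Proof. by move=> H E1 E2; apply/(fmapP HT); exists i, j, x. Qed.

Section Tab.
Variable T : filling n d.
Hypothesis HT : svtP T.

Lemma tm_bnd i j x : tm T i j x -> 1 <= i /\ i <= d /\ 1 <= j /\ j <= lam i /\ 1 <= x /\ x <= d.
Proof.
move=> H; have [/and4P [H1 H2 H3 H4] H5] := sv_supp HT H.
by move: H => /and4P [_ _ H6 _]; do !split.
Qed.

Lemma row_mono k i j x y : tm T i j x -> tm T i (j + k).+1 y -> x <= y.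
Proof.
elim: k i j x y => [|k IH] i j x y Hx Hy.
  rewrite addn0 in Hy. exact: (sv_row HT Hx Hy).
have [? [? [? [? [? ?]]]]] := tm_bnd Hy; have [? [? [? [? [? ?]]]]] := tm_bnd Hx.
have HD : inD i (j + k).+1 by rewrite /inD; apply/and4P; split; lia.
have [z Hz] := sv_ne HT HD.
apply: leq_trans (IH _ _ _ _ Hx Hz) _; apply: (sv_row HT Hz); by rewrite -addnS.
Qed.

Lemma col_mono k i j x y : tm T i j x -> tm T (i + k).+1 j y -> x < y.
Proof.
elim: k i j x y => [|k IH] i j x y Hx Hy.
  by rewrite addn0 in Hy; exact: (sv_col HT Hx Hy).
have [? [? [? [? [? ?]]]]] := tm_bnd Hy; have [? [? [? [? [? ?]]]]] := tm_bnd Hx.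
have Hl : lam (i + k.+1).+1 <= lam (i + k).+1 by rewrite addnS; apply: lamP; lia.
have HD : inD (i + k).+1 j by rewrite /inD; apply/and4P; split; lia.
have [z Hz] := sv_ne HT HD.
apply: ltn_trans (IH _ _ _ _ Hx Hz) _; apply: (sv_col HT Hz); by rewrite -addnS.
Qed.

Lemma mono i j i' j' x y : tm T i j x -> tm T i' j' y -> i < i' -> j <= j' -> x < y.
Proof.
move=> Hx Hy Hi Hj; have [? [? [? [? [? ?]]]]] := tm_bnd Hy; have [? [? [? [? [? ?]]]]] := tm_bnd Hx.
have Ei : i' = (i + (i' - i).-1).+1 by lia.
case: (ltngtP j j') Hj => // Hjj _; last first.
  by rewrite -Hjj Ei in Hy; exact: col_mono Hx Hy.
have HD : inD i' j by rewrite /inD; apply/and4P; split; lia.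
have [z Hz] := sv_ne HT HD.
have Ej : j' = (j + (j' - j).-1).+1 by lia.
apply: leq_trans (row_mono (k := (j' - j).-1) Hz _); last by rewrite -Ej.
by rewrite Ei in Hz; exact: col_mono Hx Hz.
Qed.

Lemma mono_row i j j' x y : tm T i j x -> tm T i j' y -> j < j' -> x <= y.
Proof.
move=> Hx Hy Hj; have Ej : j' = (j + (j' - j).-1).+1 by lia.
rewrite Ej in Hy; exact: row_mono Hx Hy.
Qed.

Lemma row_ge i j x : tm T i j x -> i <= x.
Proof.
elim: i j x => [//|i IH] j x Hx.
have [? [? [? [? [? ?]]]]] := tm_bnd Hx.
case: (posnP i) => [->//|Hi].
have Hl : lam i.+1 <= lam i by apply: lamP; lia.
have HD : inD i j by rewrite /inD; apply/and4P; split; lia.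
have [z Hz] := sv_ne HT HD.
have := IH _ _ Hz; have := sv_col HT Hz Hx; lia.
Qed.

Lemma diag_uniq i j i' j' x : tm T i j x -> tm T i' j' x -> j + i' = j' + i -> i = i' /\ j = j'.
Proof.
move=> Hx Hy E; case: (ltngtP i i') => H.
- by have := mono Hx Hy H ltac:(lia); rewrite ltnn.
- by have := mono Hy Hx H ltac:(lia); rewrite ltnn.
- split => //; lia.
Qed.
End Tab.

Definition key i j := (n + i - j) * d.+1 + i.

Lemma key_lt a b i i' : a < b -> i <= d -> a * d.+1 + i < b * d.+1 + i'.
Proof. move=> H1 H2; nia. Qed.

Lemma diag_find T1 T2 (H1 : svtP T1) (H2 : svtP T2)
  (E : fmap n d lam T1 = fmap n d lam T2) i j x :
  tm T1 i j x -> exists i' j', tm T2 i' j' x /\ j + i' = j' + i.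
Proof.
move=> Hx; have [? [? [? [? [? ?]]]]] := tm_bnd H1 Hx.
have Hmu := sv_mu H1 Hx; have Hmn := mu_n x.
have Hc : mkb x (x + j - i) \in fmap n d lam T1.
  by apply: (fmap_mem H1 Hx); rewrite ?mkb1 ?mkb2 //; lia.
rewrite E in Hc; case/(fmapP H2): Hc => i' [j' [x' [Hy E1 E2]]].
rewrite mkb1 // in E1; rewrite mkb2 in E2; last by lia.
subst x'; exists i', j'; split => //.
have := row_ge H1 Hx; have := row_ge H2 Hy; lia.
Qed.

Lemma inj_half T1 T2 (H1 : svtP T1) (H2 : svtP T2)
  (E : fmap n d lam T1 = fmap n d lam T2) i j :
  (forall i' j', key i' j' < key i j -> forall x, tm T1 i' j' x = tm T2 i' j' x) ->
  forall y, tm T2 i j y -> tm T1 i j y.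
Proof.
move=> IH y Hy.
have [i' [j' [Hy' Ed]]] := diag_find H2 H1 (esym E) Hy.
have [? [? [? [? [? ?]]]]] := tm_bnd H2 Hy; have [? [? [? [? [? ?]]]]] := tm_bnd H1 Hy'.
have Hjn : j <= lam i by [].
have Hln : lam i <= n by apply: leq_trans (lam_mu _) (mu_n _); lia.
case: (ltngtP i i') => Hii.
- have Hl : lam i' <= lam i by apply: lam_mono; lia.
  have HDj : inD i j.+1 by rewrite /inD; apply/and4P; split; lia.
  have [w Hw] := sv_ne H1 HDj.
  have Hk : key i j.+1 < key i j by rewrite /key; apply: key_lt; lia.
  have Hw2 : tm T2 i j.+1 w by rewrite -IH.
  have := sv_row H2 Hy Hw2; have := mono H1 Hw Hy' Hii ltac:(lia); lia.
- have Hln' : lam i' <= n by apply: leq_trans (lam_mu _) (mu_n _); lia.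
  have Hk : key i' j' < key i j.
    rewrite /key; have -> : n + i' - j' = n + i - j by lia.
    lia.
  rewrite IH // in Hy'; have [] := diag_uniq H2 Hy Hy' ltac:(lia); lia.
- subst i'; have -> : j = j' by lia.
  done.
Qed.

Lemma fmap_inj T1 T2 : svtP T1 -> svtP T2 -> fmap n d lam T1 = fmap n d lam T2 -> T1 = T2.
Proof.
move=> H1 H2 E; apply: tm_ext => i j x.
suff: forall m i j, key i j < m -> forall x, tm T1 i j x = tm T2 i j x.
  by move/(_ (key i j).+1 i j (ltnSn _)).
elim=> [//|m IH] {}i {}j Hk y; apply/idP/idP.
- apply: (inj_half H2 H1 (esym E)) => i' j' Hk' z; symmetry; apply: IH; lia.
- apply: (inj_half H1 H2 E) => i' j' Hk' z; apply: IH; lia.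
Qed.

Lemma inord_inj a b : a <= d -> b <= d -> (inord a : 'I_d.+1) = inord b -> a = b.
Proof. by move=> Ha Hb /(congr1 val); rewrite /= !inordK. Qed.

Definition upd (T : filling n d) (b0 : box n d) (S : {set 'I_d.+1}) : filling n d :=
  [ffun b => if b == b0 then S else T b].

Lemma tm_upd T r c S i j y : r <= d -> c <= n ->
  tm (upd T (mkb r c) S) i j y =
  if (i == r) && (j == c) then (y <= d) && ((inord y : 'I_d.+1) \in S) else tm T i j y.
Proof.
move=> Hr Hc; rewrite /tm ffunE.
case Hi: (i <= d) => /=; last by case: eqP => // Er; rewrite Er Hr in Hi.
case Hj: (j <= n) => /=; last first.
  by case: eqP => //= _; case: eqP => // Ec; rewrite Ec Hc in Hj.
have -> : (mkb i j == mkb r c) = (i == r) && (j == c).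
  by rewrite /mkb xpair_eqE -!val_eqE /= !inordK.
by case: ((i == r) && (j == c)).
Qed.

Definition wt (T : filling n d) := \sum_(b : box n d) \sum_(z in T b) (z : nat).

Lemma wt_upd (T : filling n d) (b0 : box n d) (S : {set 'I_d.+1}) : \sum_(z in S) (z : nat) < \sum_(z in T b0) (z : nat) ->
  wt (upd T b0 S) < wt T.
Proof.
move=> H; rewrite /wt (bigD1 b0) //= [X in _ < X](bigD1 b0) //= ffunE eqxx.
have -> : \sum_(b | b != b0) \sum_(z in upd T b0 S b) (z : nat) =
          \sum_(b | b != b0) \sum_(z in T b) (z : nat).
  by apply: eq_bigr => b Hb; rewrite ffunE (negbTE Hb).
by rewrite ltn_add2r.
Qed.

Lemma exc_stepI (C C' : {set box n d}) (b b1 b2 b3 : box n d) :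
  b \in C ->
  b1.1 = b.1.+1 :> nat -> b1.2 = b.2 :> nat ->
  b2.1 = b.1 :> nat -> b2.2 = b.2.+1 :> nat ->
  b3.1 = b.1.+1 :> nat -> b3.2 = b.2.+1 :> nat ->
  b1 \in diagram n d mu -> b1 \notin C ->
  b2 \in diagram n d mu -> b2 \notin C ->
  b3 \in diagram n d mu -> b3 \notin C ->
  C' = (C :\ b) :|: [set b3] \/ C' = C :|: [set b3] -> exc_step n d mu C C'.
Proof.
move=> Hb E11 E12 E21 E22 E31 E32 D1 N1 D2 N2 D3 N3 HC.
apply/existsP; exists b; apply/existsP; exists b1; apply/existsP; exists b2; apply/existsP; exists b3.
rewrite Hb E11 E12 E21 E22 E31 E32 !eqxx !in_setD N1 N2 N3 D1 D2 D3 /=.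
by case: HC => ->; rewrite eqxx ?orbT.
Qed.

Lemma exc_stepE (C C' : {set box n d}) : exc_step n d mu C C' -> exists b b1 b2 b3 : box n d,
  [/\ b \in C,
   (b1.1 = b.1.+1 :> nat /\ b1.2 = b.2 :> nat) /\ (b2.1 = b.1 :> nat /\ b2.2 = b.2.+1 :> nat)
     /\ (b3.1 = b.1.+1 :> nat /\ b3.2 = b.2.+1 :> nat),
   (b1 \in diagram n d mu /\ b1 \notin C) /\ (b2 \in diagram n d mu /\ b2 \notin C)
     /\ (b3 \in diagram n d mu /\ b3 \notin C) &
   C' = (C :\ b) :|: [set b3] \/ C' = C :|: [set b3]].
Proof.
case/existsP=> b /existsP [b1 /existsP [b2 /existsP [b3]]].
case/andP=> Hb /andP [/andP [/eqP E11 /eqP E12] /andP [/andP [/eqP E21 /eqP E22]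
  /andP [/andP [/eqP E31 /eqP E32] /andP [H1 /andP [H2 /andP [H3 HC]]]]]].
rewrite !in_setD in H1 H2 H3.
move: H1 H2 H3 => /andP [N1 D1] /andP [N2 D2] /andP [N3 D3].
exists b, b1, b2, b3; split => //.
by case/orP: HC => /eqP ->; [left|right].
Qed.

Lemma fmap_base T : svtP T -> (forall i j x, tm T i j x -> x <= i) ->
  fmap n d lam T = diagram n d lam.
Proof.
move=> HT Hle; apply/setP => c0; apply/idP/idP.
- move/(fmapP HT) => [i [j [y [Hy E1 E2]]]].
  have Ey : y = i by have := row_ge HT Hy; have := Hle _ _ _ Hy; lia.
  have [HD _] := sv_supp HT Hy.
  rewrite inD_box E1 E2 Ey; have -> : i + j - i = j by lia.
  by [].
- case: c0 => i0 j0; rewrite inD_box /= => Hc; have [y Hy] := sv_ne HT Hc.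
  have Ey : y = i0 by have := row_ge HT Hy; have := Hle _ _ _ Hy; lia.
  apply/(fmapP HT); exists i0, j0, y; split => //=; lia.
Qed.

Section Bstep.
Variables (T : filling n d) (r c x : nat).
Hypotheses (HT : svtP T) (Hrcx : tm T r c x) (Hrx : r < x)
  (Hmin1 : forall j y, tm T r.-1 j y -> y <= r.-1)
  (Hmin2 : forall y, tm T r c.-1 y -> y <= r).

Definition BS := (T (mkb r c) :\ inord x) :|: [set (inord x.-1 : 'I_d.+1)].
Definition BT := upd T (mkb r c) BS.

Lemma Bcase i j y : tm BT i j y <->
  (i = r /\ j = c /\ ((tm T r c y /\ y <> x) \/ y = x.-1)) \/ (~ (i = r /\ j = c) /\ tm T i j y).
Proof.
have [Hr1 [Hrd [Hc1 [Hcl [Hx1 Hxd]]]]] := tm_bnd HT Hrcx.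
have Hcn : c <= n := inD_n (proj1 (sv_supp HT Hrcx)).
rewrite /BT tm_upd //.
case: (eqVneq i r) => [->|Hir]; case: (eqVneq j c) => [->|Hjc] /=.
- split.
  + move/andP=> [Hy]; rewrite !inE => /orP [/andP [Hne Hin]|/eqP E].
    * left; do 2 split => //; left; split; first by rewrite /tm Hrd Hcn Hy.
      by move=> E; rewrite E eqxx in Hne.
    * left; do 2 split => //; right; apply: inord_inj E => //; lia.
  + case=> [[_ [_ [[Htm Hne]|->]]]|[H _]]; last by case: H.
    * move: Htm => /and4P [_ _ Hy Hin]; rewrite Hy !inE Hin /= andbT.
      apply/orP; left; apply/eqP => E; apply: Hne; exact: inord_inj E.
    * rewrite !inE eqxx orbT andbT; lia.
- split; [move=> H; right; split => //; case=> _ E; by rewrite E eqxx in Hjc|].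
  by case=> [[_ [E _]]|[_ H]] //; rewrite E eqxx in Hjc.
- split; [move=> H; right; split => //; case=> E _; by rewrite E eqxx in Hir|].
  by case=> [[E _]|[_ H]] //; rewrite E eqxx in Hir.
- split; [move=> H; right; split => //; case=> E _; by rewrite E eqxx in Hir|].
  by case=> [[E _]|[_ H]] //; rewrite E eqxx in Hir.
Qed.

Lemma Bold i j y : tm T i j y -> ~ (i = r /\ j = c /\ y = x) -> tm BT i j y.
Proof.
move=> Hy Hn; apply/Bcase.
case: (classic (i = r /\ j = c)) => [[Ei Ej]|H]; last by right.
left; do 2 split => //; left; split; [by rewrite -Ei -Ej | by move=> E; apply: Hn].
Qed.

Lemma Bnew : tm BT r c x.-1.
Proof. by apply/Bcase; left; do 2 split => //; right. Qed.

Lemma BT_svt : svtP BT.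
Proof.
have [Hr1 [Hrd [Hc1 [Hcl [Hx1 Hxd]]]]] := tm_bnd HT Hrcx.
have HD := proj1 (sv_supp HT Hrcx).
apply: SvtP.
- move=> i j y /Bcase [[-> [-> [[Hy _]|->]]]|[_ Hy]]; try exact: (sv_supp HT Hy).
  split => //; lia.
- move=> i j HD'; case: (classic (i = r /\ j = c)) => [[-> ->]|Hn].
    by exists x.-1; exact: Bnew.
  have [y Hy] := sv_ne HT HD'; exists y; apply/Bcase; by right.
- move=> i j y z /Bcase Hy /Bcase Hz.
  case: Hy => [[Ei [Ej Hy]]|[Hn Hy]]; case: Hz => [[Ei' [Ej' Hz]]|[Hn' Hz]].
  + lia.
  + subst i j; case: Hy => [[Hy _]|->]; first exact: (sv_row HT Hy Hz).
    have := sv_row HT Hrcx Hz; lia.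
  + subst i; have Ej2 : j = c.-1 by lia.
    case: Hz => [[Hz _]|->].
      by rewrite -Ej' in Hz; exact: (sv_row HT Hy Hz).
    rewrite Ej2 in Hy; have := Hmin2 Hy; lia.
  + exact: (sv_row HT Hy Hz).
- move=> i j y z /Bcase Hy /Bcase Hz.
  case: Hy => [[Ei [Ej Hy]]|[Hn Hy]]; case: Hz => [[Ei' [Ej' Hz]]|[Hn' Hz]].
  + lia.
  + subst i j; case: Hy => [[Hy _]|->]; first exact: (sv_col HT Hy Hz).
    have := sv_col HT Hrcx Hz; lia.
  + subst j; have Ei2 : i = r.-1 by lia.
    case: Hz => [[Hz _]|->].
      by rewrite -Ei' in Hz; exact: (sv_col HT Hy Hz).
    rewrite Ei2 in Hy; have := Hmin1 Hy; lia.
  + exact: (sv_col HT Hy Hz).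
- move=> i j y /Bcase [[-> [-> [[Hy _]|->]]]|[_ Hy]]; try exact: (sv_mu HT Hy).
  have := sv_mu HT Hrcx; have := muP (i := x.-1); rewrite prednK; last by lia.
  move=> H; have := H ltac:(lia) ltac:(lia); lia.
Qed.

Lemma BT_wt : wt BT < wt T.
Proof.
have [Hr1 [Hrd [Hc1 [Hcl [Hx1 Hxd]]]]] := tm_bnd HT Hrcx.
apply: wt_upd; rewrite /BS.
have Hin : (inord x : 'I_d.+1) \in T (mkb r c) by case/and4P: Hrcx.
rewrite [X in _ < X](big_setD1 (inord x)) //= inordK //.
case Hm: ((inord x.-1 : 'I_d.+1) \in T (mkb r c) :\ inord x).
- rewrite (setUidPl _); last by rewrite sub1set.
  rewrite addnC -addn1 leq_add2l; lia.
- rewrite setUC big_setU1 /=; last by rewrite Hm.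
  rewrite inordK; last lia. rewrite ltn_add2r; lia.
Qed.

Lemma Bbnd : [/\ 1 <= r <= d, 1 <= c <= lam r, r < x <= d, c <= n & x + c - r <= mu x].
Proof.
have [Hr1 [Hrd [Hc1 [Hcl [Hx1 Hxd]]]]] := tm_bnd HT Hrcx.
have Hcn := inD_n (proj1 (sv_supp HT Hrcx)).
have Hmu := sv_mu HT Hrcx.
split => //; apply/andP; split => //.
Qed.

Lemma Bmu1 : mu x <= mu x.-1.
Proof.
have [/andP [Hr1 Hrd] _ /andP [Hrx' Hxd] _ _] := Bbnd.
have := muP (i := x.-1); rewrite prednK; last by lia.
by move=> H; apply: H; lia.
Qed.

Lemma BG8 : mkb x (x.-1 + c - r) \notin fmap n d lam BT.
Proof.
have [/andP [Hr1 Hrd] /andP [Hc1 Hcl] /andP [Hrx' Hxd] Hcn Hmu] := Bbnd.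
have Hmn := mu_n x.
apply/negP => /(fmapP BT_svt) [i' [j' [y [Hy F1 F2]]]].
rewrite mkb1 // in F1; rewrite mkb2 in F2; last by lia.
subst y.
case/Bcase: Hy => [[_ [_ [[_ H]|H]]]|[Hn Hy]]; [by [] | lia|].
have := row_ge HT Hy; have [? [? [? [? [? ?]]]]] := tm_bnd HT Hy => Hi'.
case: (ltngtP i' r) => Hir.
+ have HD' : inD r c.-1 by rewrite /inD; apply/and4P; split; lia.
  have [z Hz] := sv_ne HT HD'.
  have := Hmin2 Hz; have := mono HT Hy Hz Hir ltac:(lia); lia.
+ have := mono HT Hrcx Hy Hir ltac:(lia); lia.
+ have Ej : j' = c.-1 by lia.
  rewrite Hir Ej in Hy; have := Hmin2 Hy; lia.
Qed.

Lemma BG10 : mkb x.-1 (x + c - r) \notin fmap n d lam BT.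
Proof.
have [/andP [Hr1 Hrd] /andP [Hc1 Hcl] /andP [Hrx' Hxd] Hcn Hmu] := Bbnd.
have Hmn := mu_n x.
apply/negP => /(fmapP BT_svt) [i' [j' [y [Hy F1 F2]]]].
rewrite mkb1 in F1; last by lia.
rewrite mkb2 in F2; last by lia.
subst y.
case/Bcase: Hy => [[Ei [Ej _]]|[Hn Hy]]; first by rewrite Ei Ej in F2; lia.
have := row_ge HT Hy; have [? [? [? [? [? ?]]]]] := tm_bnd HT Hy => Hi'.
case: (ltngtP i' r) => Hir.
+ have Hl : lam r <= lam r.-1 by apply: lam_mono; lia.
  have HD' : inD r.-1 c by rewrite /inD; apply/and4P; split; lia.
  have [z Hz] := sv_ne HT HD'.
  have := Hmin1 Hz.
  case: (ltngtP i' r.-1) => Hir'.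
  * have := mono HT Hy Hz Hir' ltac:(lia); lia.
  * lia.
  * have Ej : j' = c by lia.
    rewrite Hir' Ej in Hy; have := Hmin1 Hy; lia.
+ have := mono HT Hrcx Hy Hir ltac:(lia); lia.
+ have Ej : c < j' by lia.
  rewrite Hir in Hy; have := mono_row HT Hrcx Hy Ej; lia.
Qed.

Lemma BG12 : mkb x (x + c - r) \notin fmap n d lam BT.
Proof.
have [/andP [Hr1 Hrd] /andP [Hc1 Hcl] /andP [Hrx' Hxd] Hcn Hmu] := Bbnd.
have Hmn := mu_n x.
apply/negP => /(fmapP BT_svt) [i' [j' [y [Hy F1 F2]]]].
rewrite mkb1 // in F1; rewrite mkb2 in F2; last by lia.
subst y.
case/Bcase: Hy => [[_ [_ [[_ H]|H]]]|[Hn Hy]]; [by [] | lia|].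
have := row_ge HT Hy => Hi'.
have [E9 E10] := diag_uniq HT Hrcx Hy ltac:(lia).
by apply: Hn; split.
Qed.

Lemma BT_fmap2 : tm T r c x.-1 ->
  fmap n d lam T = fmap n d lam BT :|: [set mkb x (x + c - r)].
Proof.
move=> Hk.
have [/andP [Hr1 Hrd] /andP [Hc1 Hcl] /andP [Hrx' Hxd] Hcn Hmu] := Bbnd.
have Hmn := mu_n x.
have HB := BT_svt.
apply/setP => c0; rewrite in_setU in_set1; apply/idP/idP.
- move/(fmapP HT) => [i [j [y [Hy F1 F2]]]].
  case: (classic (i = r /\ j = c /\ y = x)) => [[Ei [Ej Ey]]|Hn].
    rewrite Ei Ej Ey in F1 F2; apply/orP; right; apply/eqP.
    by apply: box_ext; rewrite ?mkb1 ?mkb2 //; lia.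
  apply/orP; left; apply/(fmapP HB); exists i, j, y; split => //; exact: Bold.
- case/orP => [/(fmapP HB) [i [j [y [Hy F1 F2]]]]|/eqP ->].
    case/Bcase: Hy => [[Ei [Ej [[Hy _]|Ey]]]|[_ Hy]].
    + by rewrite Ei Ej in F1 F2; apply/(fmapP HT); exists r, c, y.
    + by rewrite Ei Ej Ey in F1 F2; apply/(fmapP HT); exists r, c, x.-1.
    + by apply/(fmapP HT); exists i, j, y.
  by apply: (fmap_mem HT Hrcx); rewrite ?mkb1 ?mkb2 //; lia.
Qed.

Lemma BT_fmap1 : ~~ tm T r c x.-1 ->
  fmap n d lam T = (fmap n d lam BT :\ mkb x.-1 (x.-1 + c - r)) :|: [set mkb x (x + c - r)].
Proof.
move=> Hk.
have [/andP [Hr1 Hrd] /andP [Hc1 Hcl] /andP [Hrx' Hxd] Hcn Hmu] := Bbnd.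
have Hmn := mu_n x.
have HB := BT_svt.
apply/setP => c0; rewrite in_setU in_set1; apply/idP/idP.
- move/(fmapP HT) => [i [j [y [Hy F1 F2]]]].
  case: (classic (i = r /\ j = c /\ y = x)) => [[Ei [Ej Ey]]|Hn].
    rewrite Ei Ej Ey in F1 F2; apply/orP; right; apply/eqP.
    by apply: box_ext; rewrite ?mkb1 ?mkb2 //; lia.
  apply/orP; left; rewrite in_setD1; apply/andP; split; last first.
    by apply/(fmapP HB); exists i, j, y; split => //; exact: Bold.
  apply/negP => /eqP Ec; move: F1 F2; rewrite Ec mkb1 ?mkb2; [|lia|lia] => F1 F2.
  subst y.
  have [? [? [? [? [? ?]]]]] := tm_bnd HT Hy.
  have Hy' := Bold Hy Hn.
  have [Ei Ej] := diag_uniq HB Hy' Bnew ltac:(lia).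
  by move: Hk; rewrite -Ei -Ej Hy.
- case/orP => [|/eqP ->]; last first.
    by apply: (fmap_mem HT Hrcx); rewrite ?mkb1 ?mkb2 //; lia.
  rewrite in_setD1 => /andP [Hne /(fmapP HB) [i [j [y [Hy F1 F2]]]]].
  case/Bcase: Hy => [[Ei [Ej [[Hy _]|Ey]]]|[_ Hy]].
  + by rewrite Ei Ej in F1 F2; apply/(fmapP HT); exists r, c, y.
  + exfalso; move/eqP: Hne; apply.
    rewrite Ei Ej Ey in F1 F2.
    by apply: box_ext; rewrite ?mkb1 ?mkb2 //; lia.
  + by apply/(fmapP HT); exists i, j, y.
Qed.

Lemma BT_exc : exc_step n d mu (fmap n d lam BT) (fmap n d lam T).
Proof.
have [/andP [Hr1 Hrd] /andP [Hc1 Hcl] /andP [Hrx' Hxd] Hcn Hmu] := Bbnd.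
have Hmn := mu_n x.
have Hmu1 := Bmu1.
have HB := BT_svt.
have Ee : x + c - r = (x.-1 + c - r).+1 by lia.
have G0 : mkb x.-1 (x.-1 + c - r) \in fmap n d lam BT.
  by apply: (fmap_mem HB Bnew); rewrite ?mkb1 ?mkb2 //; lia.
have G8 := BG8; have G10 := BG10; have G12 := BG12.
have F2 := BT_fmap2; have F1 := BT_fmap1.
move: G10 G12 F1 F2; rewrite Ee.
set e := x.-1 + c - r => G10 G12 F1 F2.
have He : e.+1 <= n by rewrite /e; lia.
have Hxd' : x.-1 <= d by lia.
have He' : e <= n by lia.
have E1 := mkb1 e Hxd'; have E2 := mkb2 x.-1 He'.
have E3 := mkb1 e Hxd; have E4 := mkb2 x He'.
have E5 := mkb1 e.+1 Hxd'; have E6 := mkb2 x.-1 He.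
have E7 := mkb1 e.+1 Hxd; have E8 := mkb2 x He.
have D1 : mkb x e \in diagram n d mu.
  by rewrite Dm_box E3 E4; apply/and3P; split; rewrite /e; lia.
have D2 : mkb x.-1 e.+1 \in diagram n d mu.
  by rewrite Dm_box E5 E6; apply/and3P; split; rewrite /e; lia.
have D3 : mkb x e.+1 \in diagram n d mu.
  by rewrite Dm_box E7 E8; apply/and3P; split; rewrite /e; lia.
have HC : fmap n d lam T = (fmap n d lam BT :\ mkb x.-1 e) :|: [set mkb x e.+1] \/
          fmap n d lam T = fmap n d lam BT :|: [set mkb x e.+1].
  case Hk: (tm T r c x.-1); [right; exact: F2 | left; apply: F1; by rewrite Hk].
apply: (exc_stepI G0 _ _ _ _ _ _ D1 G8 D2 G10 D3 G12 HC).
- by rewrite E3 E1; lia.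
- by rewrite E4.
- by rewrite E5.
- by rewrite E6 E2.
- by rewrite E7 E1; lia.
- by rewrite E8 E2.
Qed.
End Bstep.

Lemma reach T : svtP T -> connect (exc_step n d mu) (diagram n d lam) (fmap n d lam T).
Proof.
suff H : forall m T, svtP T -> wt T = m ->
    connect (exc_step n d mu) (diagram n d lam) (fmap n d lam T).
  by move=> HT; exact: H HT erefl.
elim/ltn_ind => m IH {}T HT Hw.
case: (classic (exists i j x, tm T i j x /\ i < x)) => [Hex|Hno]; last first.
  have -> : fmap n d lam T = diagram n d lam.
    apply: fmap_base => // i j x Hx; rewrite leqNgt; apply/negP => Hl; apply: Hno.
    by exists i, j, x.
  exact: connect0.
case: Hex => i0 [j0 [x0 [H0 Hlt0]]].
have [r [[c0 [x1 [H1 Hlt1]]] Hminr]] := ex_min (P := fun r => exists c x, tm T r c x /\ r < x)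
  (ex_intro _ i0 (ex_intro _ j0 (ex_intro _ x0 (conj H0 Hlt0)))).
have [c [[x [H2 Hlt2]] Hminc]] := ex_min (P := fun c => exists x, tm T r c x /\ r < x)
  (ex_intro _ c0 (ex_intro _ x1 (conj H1 Hlt1))).
have [Hr1 [_ [Hc1 _]]] := tm_bnd HT H2.
have Hm1 : forall j y, tm T r.-1 j y -> y <= r.-1.
  move=> j y Hy; rewrite leqNgt; apply/negP => Hl.
  by apply: (Hminr r.-1); [lia | exists j, y].
have Hm2 : forall y, tm T r c.-1 y -> y <= r.
  move=> y Hy; rewrite leqNgt; apply/negP => Hl.
  by apply: (Hminc c.-1); [lia | exists y].
have HB := BT_svt HT H2 Hlt2 Hm1 Hm2.
have Hw' := BT_wt HT H2 Hlt2.
apply: connect_trans (IH _ _ _ HB erefl) (connect1 (BT_exc HT H2 Hlt2 Hm1 Hm2)).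
by rewrite -Hw.
Qed.

Section Fstep.
Variables (T : filling n d) (r c x : nat) (keep : bool).
Hypotheses (HT : svtP T) (Hrcx : tm T r c x)
  (N1 : ~ tm T r c x.+1)
  (N2 : forall y, tm T r c.+1 y -> y <> x)
  (N3 : forall y, tm T r.+1 c y -> y <> x.+1)
  (Hxd : x.+1 <= d) (Hmux : x.+1 + c - r <= mu x.+1).

Definition FS := (if keep then T (mkb r c) else T (mkb r c) :\ inord x) :|: [set (inord x.+1 : 'I_d.+1)].
Definition FT := upd T (mkb r c) FS.

Lemma Fcase i j y : tm FT i j y <->
  (i = r /\ j = c /\ ((tm T r c y /\ (keep \/ y <> x)) \/ y = x.+1)) \/ (~ (i = r /\ j = c) /\ tm T i j y).
Proof.
have [Hr1 [Hrd [Hc1 [Hcl [Hx1 Hxd']]]]] := tm_bnd HT Hrcx.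
have Hcn : c <= n := inD_n (proj1 (sv_supp HT Hrcx)).
rewrite /FT tm_upd //.
case: (eqVneq i r) => [->|Hir]; case: (eqVneq j c) => [->|Hjc] /=.
- split.
  + move/andP=> [Hy]; rewrite !inE => /orP [Hin|/eqP E].
    * left; do 2 split => //; left.
      case: keep Hin => /=.
        by move=> Hin; split; [rewrite /tm Hrd Hcn Hy | left].
      rewrite in_setD1 => /andP [Hne Hin]; split; first by rewrite /tm Hrd Hcn Hy.
      by right => E; rewrite E eqxx in Hne.
    * left; do 2 split => //; right; apply: inord_inj E => //; lia.
  + case=> [[_ [_ [[Htm Hk]|->]]]|[H _]]; last by case: H.
    * move: Htm => /and4P [_ _ Hy Hin]; rewrite Hy !inE /=.
      case: keep Hk => /= Hk; first by rewrite Hin.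
      case: Hk => // Hk; rewrite in_setD1 Hin andbT; apply/orP; left.
      by apply/eqP => E; apply: Hk; exact: inord_inj E.
    * by rewrite !inE eqxx orbT Hxd.
- split; [move=> H; right; split => //; case=> _ E; by rewrite E eqxx in Hjc|].
  by case=> [[_ [E _]]|[_ H]] //; rewrite E eqxx in Hjc.
- split; [move=> H; right; split => //; case=> E _; by rewrite E eqxx in Hir|].
  by case=> [[E _]|[_ H]] //; rewrite E eqxx in Hir.
- split; [move=> H; right; split => //; case=> E _; by rewrite E eqxx in Hir|].
  by case=> [[E _]|[_ H]] //; rewrite E eqxx in Hir.
Qed.

Lemma Fnew : tm FT r c x.+1.
Proof. by apply/Fcase; left; do 2 split => //; right. Qed.

Lemma FT_svt : svtP FT.
Proof.
have [Hr1 [Hrd [Hc1 [Hcl [Hx1 Hxd']]]]] := tm_bnd HT Hrcx.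
have HD := proj1 (sv_supp HT Hrcx).
apply: SvtP.
- move=> i j y /Fcase [[-> [-> [[Hy _]|->]]]|[_ Hy]]; try exact: (sv_supp HT Hy).
  by split.
- move=> i j HD'; case: (classic (i = r /\ j = c)) => [[-> ->]|Hn].
    by exists x.+1; exact: Fnew.
  have [y Hy] := sv_ne HT HD'; exists y; apply/Fcase; by right.
- move=> i j y z /Fcase Hy /Fcase Hz.
  case: Hy => [[Ei [Ej Hy]]|[Hn Hy]]; case: Hz => [[Ei' [Ej' Hz]]|[Hn' Hz]].
  + lia.
  + subst i j; case: Hy => [[Hy _]|->]; first exact: (sv_row HT Hy Hz).
    have := sv_row HT Hrcx Hz; have := N2 Hz; lia.
  + subst i; case: Hz => [[Hz _]|->].
      by rewrite -Ej' in Hz; exact: (sv_row HT Hy Hz).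
    have H := Hrcx; rewrite -Ej' in H; have := sv_row HT Hy H; lia.
  + exact: (sv_row HT Hy Hz).
- move=> i j y z /Fcase Hy /Fcase Hz.
  case: Hy => [[Ei [Ej Hy]]|[Hn Hy]]; case: Hz => [[Ei' [Ej' Hz]]|[Hn' Hz]].
  + lia.
  + subst i j; case: Hy => [[Hy _]|->]; first exact: (sv_col HT Hy Hz).
    have := sv_col HT Hrcx Hz; have := N3 Hz; lia.
  + subst j; case: Hz => [[Hz _]|->].
      by rewrite -Ei' in Hz; exact: (sv_col HT Hy Hz).
    have H := Hrcx; rewrite -Ei' in H; have := sv_col HT Hy H; lia.
  + exact: (sv_col HT Hy Hz).
- move=> i j y /Fcase [[-> [-> [[Hy _]|->]]]|[_ Hy]]; try exact: (sv_mu HT Hy).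
  exact: Hmux.
Qed.

Lemma FT_fmap : fmap n d lam FT =
  (if keep then fmap n d lam T else fmap n d lam T :\ mkb x (x + c - r))
    :|: [set mkb x.+1 (x.+1 + c - r)].
Proof.
have [Hr1 [Hrd [Hc1 [Hcl [Hx1 Hxd']]]]] := tm_bnd HT Hrcx.
have Hmn := mu_n x.+1.
have Hrx := row_ge HT Hrcx.
have HF := FT_svt.
apply/setP => c0; rewrite in_setU in_set1; apply/idP/idP.
- move/(fmapP HF) => [i [j [y [Hy F1 F2]]]].
  case/Fcase: Hy => [[Ei [Ej [[Hy Hk]|Ey]]]|[Hn Hy]].
  + rewrite Ei Ej in F1 F2; apply/orP; left.
    case Hkp: keep.
      by apply/(fmapP HT); exists r, c, y.
    rewrite in_setD1; apply/andP; split; last by apply/(fmapP HT); exists r, c, y.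
    apply/negP => /eqP Ec; rewrite Ec mkb1 // in F1.
    by case: Hk => Hk; [rewrite Hkp in Hk | apply: Hk].
  + rewrite Ei Ej Ey in F1 F2; apply/orP; right; apply/eqP.
    by apply: box_ext; rewrite ?mkb1 ?mkb2 //; lia.
  + apply/orP; left.
    case Hkp: keep.
      by apply/(fmapP HT); exists i, j, y.
    rewrite in_setD1; apply/andP; split; last by apply/(fmapP HT); exists i, j, y.
    apply/negP => /eqP Ec; move: F1 F2; rewrite Ec mkb1 // mkb2; last by lia.
    move=> F1 F2; subst y.
    have := row_ge HT Hy => Hi.
    have [Ei Ej] := diag_uniq HT Hy Hrcx ltac:(lia).
    by apply: Hn.
- case/orP => [|/eqP ->]; last first.
    by apply: (fmap_mem HF Fnew); rewrite ?mkb1 ?mkb2 //; lia.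
  case Hkp: keep => H.
  + case/(fmapP HT): H => i [j [y [Hy F1 F2]]].
    apply/(fmapP HF); exists i, j, y; split => //; apply/Fcase.
    case: (classic (i = r /\ j = c)) => [[Ei Ej]|Hn]; last by right.
    by left; do 2 split => //; left; rewrite -Ei -Ej Hkp; split => //; left.
  + move: H; rewrite in_setD1 => /andP [Hne /(fmapP HT) [i [j [y [Hy F1 F2]]]]].
    apply/(fmapP HF); exists i, j, y; split => //; apply/Fcase.
    case: (classic (i = r /\ j = c)) => [[Ei Ej]|Hn]; last by right.
    left; do 2 split => //; left; rewrite -Ei -Ej; split => //; right => Ey.
    move/eqP: Hne; apply; rewrite Ei Ej Ey in F1 F2.
    by apply: box_ext; rewrite ?mkb1 ?mkb2 //; lia.
Qed.
End Fstep.

Lemma fstep T C' : svtP T -> exc_step n d mu (fmap n d lam T) C' ->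
  exists T', svtP T' /\ fmap n d lam T' = C'.
Proof.
move=> HT /exc_stepE [b [b1 [b2 [b3 [Hb [[E11 E12] [[E21 E22] [E31 E32]]]
  [[D1 N1] [[D2 N2] [D3 N3]]] HC]]]]].
case/(fmapP HT): Hb => r [c [x [Hrcx Eb1 Eb2]]].
have [Hr1 [Hrd [Hc1 [Hcl [Hx1 Hxd']]]]] := tm_bnd HT Hrcx.
have Hrx := row_ge HT Hrcx.
have Hcn : c <= n := inD_n (proj1 (sv_supp HT Hrcx)).
have [Hb31 _] := ord_le b3.
have Hxd : x.+1 <= d by rewrite -Eb1 -E31.
have Hmux : x.+1 + c - r <= mu x.+1.
  move: D3; rewrite Dm_box E31 E32 Eb1 Eb2 => /and3P [_ _]; lia.
have Hn1 : ~ tm T r c x.+1.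
  move=> H; move/negP: N3; apply; apply: (fmap_mem HT H); rewrite ?E31 ?E32 ?Eb1 ?Eb2 //; lia.
have Hn2 : forall y, tm T r c.+1 y -> y <> x.
  move=> y Hy Ey; move/negP: N2; apply; apply: (fmap_mem HT Hy); rewrite ?E21 ?E22 ?Eb1 ?Eb2 //; lia.
have Hn3 : forall y, tm T r.+1 c y -> y <> x.+1.
  move=> y Hy Ey; move/negP: N1; apply; apply: (fmap_mem HT Hy); rewrite ?E11 ?E12 ?Eb1 ?Eb2 //; lia.
have Hmn := mu_n x.+1.
have Eb : b = mkb x (x + c - r).
  apply: box_ext; rewrite ?mkb1 ?mkb2 //; lia.
have Eb3 : b3 = mkb x.+1 (x.+1 + c - r).
  apply: box_ext; rewrite ?mkb1 ?mkb2 ?E31 ?E32 //; lia.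
case: HC => HC.
- exists (FT T r c x false); split; first exact: FT_svt.
  by rewrite FT_fmap // HC Eb Eb3.
- exists (FT T r c x true); split; first exact: FT_svt.
  by rewrite FT_fmap // HC Eb3.
Qed.

Definition T0 : filling n d :=
  [ffun b : box n d => if b \in diagram n d lam then [set b.1] else set0].

Lemma tm_T0 i j y : tm T0 i j y = [&& i <= d, j <= n, inD i j & y == i].
Proof.
rewrite /tm ffunE.
case Hi: (i <= d) => //=; case Hj: (j <= n) => //=.
have -> : (mkb i j \in diagram n d lam) = inD i j by rewrite inD_box mkb1 // mkb2.
case: (inD i j) => /=; last by rewrite in_set0 andbF.
case Hy: (y <= d) => /=; last by apply/esym/eqP => E; rewrite E Hi in Hy.
by rewrite in_set1 -val_eqE /= !inordK.
Qed.

Lemma T0_svt : svtP T0.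
Proof.
apply: SvtP.
- move=> i j y; rewrite tm_T0.
  by case/and4P=> _ _ HD /eqP ->; split => //; case/and4P: HD.
- move=> i j HD; exists i; rewrite tm_T0 HD eqxx /= andbT (inD_n HD).
  by move: HD => /and4P [_ -> _ _].
- move=> i j y z; rewrite !tm_T0.
  by case/and4P=> _ _ _ /eqP -> /and4P [_ _ _ /eqP ->].
- move=> i j y z; rewrite !tm_T0.
  by case/and4P=> _ _ _ /eqP -> /and4P [_ _ _ /eqP ->].
- move=> i j y; rewrite tm_T0.
  case/and4P=> _ _ /and4P [H1 H2 H3 H4] /eqP ->.
  have := lam_mu (i := i); rewrite H1 H2 => /(_ isT); lia.
Qed.

Lemma exc_reach C : connect (exc_step n d mu) (diagram n d lam) C ->
  exists T, svtP T /\ fmap n d lam T = C.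
Proof.
case/connectP => p Hp ->.
suff: forall p C0, (exists T, svtP T /\ fmap n d lam T = C0) ->
    path (exc_step n d mu) C0 p -> exists T, svtP T /\ fmap n d lam T = last C0 p.
  apply => //; exists T0; split; first exact: T0_svt.
  apply: fmap_base; first exact: T0_svt.
  by move=> i j y; rewrite tm_T0 => /and4P [_ _ _ /eqP ->].
elim=> [|C1 q IH] C0 [T [HT ET]] /=; first by exists T.
case/andP => Hs Hq; rewrite -ET in Hs.
have [T' [HT' ET']] := fstep HT Hs.
by apply: IH Hq; exists T'.
Qed.

Lemma comb_main :
  {in svt_set n d lam mu &, injective (fmap n d lam)} /\
  [set fmap n d lam T | T in svt_set n d lam mu] = excitations n d lam mu.
Proof.
split.
- move=> T1 T2; rewrite !inE => /svtE H1 /svtE H2; exact: fmap_inj.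
- apply/setP => C; rewrite /excitations inE; apply/imsetP/idP.
  + case=> T; rewrite inE => /svtE HT ->; exact: reach.
  + move/exc_reach => [T [HT <-]]; exists T => //; rewrite inE; exact/svtE.
Qed.
End Comb.


Theorem proposition4p18 (n d : nat) (w v : 'S_n) :
  1 <= d -> d < n ->
  grassmannian d w -> grassmannian d v -> bruhat_le w v ->
  {in svt_set n d (lambda_of d w) (lambda_of d v) &,
     injective (fmap n d (lambda_of d w))} /\
  [set fmap n d (lambda_of d w) T | T in svt_set n d (lambda_of d w) (lambda_of d v)]
    = excitations n d (lambda_of d w) (lambda_of d v).
Proof.
move=> Hd Hdn Gw Gv B.
apply: comb_main.
- exact: lam_part Gw.
- exact: lam_part Gv.
- move=> i Hi; exact: lam_sub Hdn Gw Gv B i Hi.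
- move=> i; exact: lam_le.
Qed.
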